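(* Let $(F_S,\iota)$ be an embedded local étale algebra and $\Gamma\subseteq\mathrm{PGL}_2(F_S)$ a torsion-free plectic subgroup. Then $\Gamma$ is semi-simple, i.e. for no $\mathfrak p\in S$ does $\mathcal L_{\Gamma,\mathfrak p}$ have exactly one element.
   Context: Fix a prime $p$ and let $\mathbf{C}$ be the completion of an algebraic closure of $\mathbb{Q}_p$ or of $\mathbb{F}_p((T))$. An embedded local étale algebra $(F_S,\iota)$ consists of a finite non-empty set $S$, non-Archimedean local fields $F_\mathfrak p$ ($\mathfrak p\in S$) of residue characteristic $p$ and the same characteristic as $\mathbf C$, and embeddings $\iota_\mathfrak p\colon F_\mathfrak p\hookrightarrow\mathbf C$ (so $\mathbb P^1(F_\mathfrak p)\subseteq\mathbb P^1(\mathbf C)$). $\mathrm{PGL}_2(F_S)=\prod_\mathfrak p\mathrm{PGL}_2(F_\mathfrak p)$ acts componentwise by Möbius transformations on $\prod_{\mathfrak p\in S}\mathbb P^1(\mathbf C)$. The limit set $\mathcal L^S_\Gamma$ of a subgroup $\Gamma$ is the set of $x$ with $\gamma_j(y)\to x$ for some $y$ and pairwise distinct $\gamma_j\in\Gamma$. $\Gamma$ is plectic if there are subsets $\mathcal L_{\Gamma,\mathfrak p}\subseteq\mathbb P^1(F_\mathfrak p)$ with $\mathcal L^S_\Gamma=\bigcup_\mathfrak p\big(\mathcal L_{\Gamma,\mathfrak p}\times\prod_{\mathfrak q\ne\mathfrak p}\mathbb P^1(\mathbf C)\big)$. *)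

(* Defs.v *)
From HB Require Import structures.
From mathcomp Require Import all_boot all_order all_algebra.
From mathcomp Require Import reals.
Set Implicit Arguments. Unset Strict Implicit. Unset Printing Implicit Defensive.
Import Order.TTheory GRing.Theory Num.Theory.
Local Open Scope ring_scope.

Section Plectic.
Variables (R : realType) (C : fieldType) (v : C -> R).

Definition cvgC (u : nat -> C) (l : C) : Prop :=
  forall e : R, 0 < e -> exists N : nat, forall n, (N <= n)%N -> v (u n - l) < e.

Definition cauchyC (u : nat -> C) : Prop :=
  forall e : R, 0 < e -> exists N : nat, forall m n,
    (N <= m)%N -> (N <= n)%N -> v (u m - u n) < e.

Record nonarch_abs : Prop := {
  abs_ge0 : forall x, 0 <= v x;
  abs_eq0 : forall x, v x = 0 <-> x = 0;
  abs_mul : forall x y, v (x * y) = v x * v y;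
  abs_ultra : forall x y, v (x + y) <= Num.max (v x) (v y);
  abs_nontriv : exists x, x != 0 /\ v x != 1 }.

Record subfield (K : C -> Prop) : Prop := {
  sf0 : K 0; sf1 : K 1;
  sfD : forall x y, K x -> K y -> K (x + y);
  sfN : forall x, K x -> K (- x);
  sfM : forall x y, K x -> K y -> K (x * y);
  sfV : forall x, K x -> K (x^-1) }.

(** K is a (closed) subfield of C which, with the restricted absolute value,
    is a non-Archimedean local field: complete (= closed in the complete C),
    discretely valued, with finite residue field. *)
Record local_subfield (K : C -> Prop) : Prop := {
  ls_subfield : subfield K;
  ls_closed : forall u l, (forall n, K (u n)) -> cvgC u l -> K l;
  ls_discrete : exists pi, [/\ K pi, 0 < v pi, v pi < 1 &
      forall x, K x -> x != 0 -> exists z : int, v x = v pi ^ z];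
  ls_finite_residue : exists s : seq C,
      (forall r, r \in s -> K r /\ v r <= 1) /\
      (forall x, K x -> v x <= 1 -> exists2 r, r \in s & v (x - r) < 1) }.

Definition algebraic_over (K : C -> Prop) (x : C) : Prop :=
  exists q : {poly C}, [/\ q != 0, forall i, K q`_i & root q x].

(** C is (isometric to) the completion of an algebraic closure of Q_p or of
    F_p((T)): C is a complete, algebraically closed non-Archimedean valued
    field containing a closed subfield K0 that is a local field with residue
    field F_p and which, if char C = 0, has p as a uniformizer (so K0 = Q_p;
    if char C = p, then K0 = F_p((T))), and the elements algebraic over K0 are
    dense in C. *)
Record Cp_setting (p : nat) : Prop := {
  cs_prime : prime p;
  cs_abs : nonarch_abs;
  cs_complete : forall u, cauchyC u -> exists l, cvgC u l;
  cs_closed : GRing.closed_field_axiom C;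
  cs_base : exists K0 : C -> Prop,
    [/\ local_subfield K0,
        (forall x, K0 x -> v x <= 1 -> exists2 k, (k < p)%N & v (x - k%:R) < 1),
        (p%:R == 0 :> C) \/
          (forall x, K0 x -> x != 0 -> exists z : int, v x = v (p%:R) ^ z) &
        (forall x (e : R), 0 < e -> exists2 y, algebraic_over K0 y & v (x - y) < e)] }.

(** P^1(C) = C ∪ {∞} with None = ∞, and its (chordal) topology. *)
Definition P1 := option C.

Definition chord (z w : P1) : R :=
  match z, w with
  | Some x, Some y => v (x - y) / (Num.max 1 (v x) * Num.max 1 (v y))
  | Some x, None | None, Some x => 1 / Num.max 1 (v x)
  | None, None => 0
  end.

Definition cvgP1 (u : nat -> P1) (z : P1) : Prop :=
  forall e : R, 0 < e -> exists N : nat, forall n, (N <= n)%N -> chord (u n) z < e.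

Definition inP1 (K : C -> Prop) (z : P1) : Prop :=
  match z with None => True | Some x => K x end.

Definition mobius (A : 'M[C]_2) (z : P1) : P1 :=
  let a := A ord0 ord0 in let b := A ord0 ord_max in
  let c := A ord_max ord0 in let d := A ord_max ord_max in
  match z with
  | Some x => if c * x + d == 0 then None else Some ((a * x + b) / (c * x + d))
  | None => if c == 0 then None else Some (a / c)
  end.

Variables (S : finType) (F : S -> C -> Prop).

(** Representatives in GL_2(F_S) = prod_p GL_2(F_p). *)
Definition inGL (g : S -> 'M[C]_2) : Prop :=
  forall s, (forall i j, F s (g s i j)) /\ \det (g s) != 0.

(** Equality in PGL_2(F_S): componentwise equality up to nonzero scalars. *)
Definition proj_eq (g h : S -> 'M[C]_2) : Prop :=
  forall s, exists2 l : C, l != 0 & h s = l *: g s.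

Definition one_fam : S -> 'M[C]_2 := fun _ => 1%:M.

(** A subgroup of PGL_2(F_S), represented by its (scalar-saturated) preimage
    in GL_2(F_S). *)
Record PGL_subgroup (G : (S -> 'M[C]_2) -> Prop) : Prop := {
  sg_GL : forall g, G g -> inGL g;
  sg_1 : G one_fam;
  sg_M : forall g h, G g -> G h -> G (fun s => g s *m h s);
  sg_V : forall g, G g -> G (fun s => invmx (g s));
  sg_sat : forall g h, G g -> inGL h -> proj_eq g h -> G h }.

Definition torsion_free (G : (S -> 'M[C]_2) -> Prop) : Prop :=
  forall g n, G g -> (0 < n)%N -> proj_eq (fun s => g s ^+ n) one_fam ->
    proj_eq g one_fam.

Definition limit_set (G : (S -> 'M[C]_2) -> Prop) (x : S -> P1) : Prop :=
  exists (y : S -> P1) (gam : nat -> S -> 'M[C]_2),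
    [/\ forall j, G (gam j),
        forall i j, i <> j -> ~ proj_eq (gam i) (gam j) &
        forall s, cvgP1 (fun j => mobius (gam j s) (y s)) (x s)].

(** L : S -> P1 -> Prop exhibits Γ as plectic, with L s = L_{Γ,s}. *)
Definition plectic_decomp (G : (S -> 'M[C]_2) -> Prop) (L : S -> P1 -> Prop) : Prop :=
  (forall s z, L s z -> inP1 (F s) z) /\
  (forall x, limit_set G x <-> exists s, L s (x s)).

End Plectic.

(* Main.v *)
Require Import Defs.
From HB Require Import structures.
From mathcomp Require Import all_boot all_order all_algebra.
From mathcomp Require Import reals.
Import Order.TTheory GRing.Theory Num.Theory.
Local Open Scope ring_scope.
From mathcomp Require Import ring lra zify.
From Stdlib Require Import Classical.
From mathcomp Require boolp.
Import Order.TTheory GRing.Theory Num.Theory.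
Local Open Scope ring_scope.
Set Implicit Arguments. Unset Strict Implicit. Unset Printing Implicit Defensive.

Lemma geo (R : realType) (th B e : R) : 0 <= th -> th < 1 -> 0 <= B -> 0 < e ->
  exists K, forall k, (K <= k)%N -> th ^+ k * B < e.
Proof.
move=> t0 t1 B0 e0.
have [->|tn0] := eqVneq th 0.
  by exists 1%N => k hk; rewrite expr0n; case: k hk => // k _; rewrite mul0r.
have tp : 0 < th by rewrite lt_def tn0 t0.
set h := th^-1 - 1.
have hp : 0 < h by rewrite /h subr_gt0 invf_gt1.
have bern : forall k, 1 + k%:R * h <= (1 + h) ^+ k.
  elim=> [|k ih]; first by rewrite mul0r addr0 expr0.
  rewrite exprSr -natr1; apply: le_trans (_ : (1 + k%:R * h) * (1 + h) <= _).
    have : 0 <= k%:R * h * h by rewrite !mulr_ge0 // ltW.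
    by move=> hh; nra.
  by apply: ler_wpM2r => //; rewrite addr_ge0 // ltW.
have e1h : 1 + h = th^-1 by rewrite /h addrC subrK.
set x := B / (e * h).
have x0 : 0 <= x by rewrite /x divr_ge0 // mulr_ge0 // ltW.
exists (Num.Def.archi_bound x) => k hk.
have xk : x < k%:R.
  apply: lt_le_trans (archi_boundP x0) _; by rewrite ler_nat.
have thk : th ^+ k * (1 + k%:R * h) <= 1.
  have : th ^+ k * (1 + h) ^+ k = 1 by rewrite -exprMn e1h mulfV // expr1n.
  move=> E; apply: (@le_trans _ _ (th ^+ k * (1 + h) ^+ k)); last by rewrite E.
  apply: ler_wpM2l; [exact: exprn_ge0 | exact: bern].
have pk : 0 < 1 + k%:R * h by rewrite ltr_pwDl // mulr_ge0 // ltW.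
have hb : B < k%:R * (e * h) by move: xk; rewrite /x ltr_pdivrMr ?mulr_gt0.
have : B < e * (1 + k%:R * h).
  apply: lt_le_trans hb _; nra.
move=> hB.
have thk0 : 0 <= th ^+ k by exact: exprn_ge0.
have tkp : 0 < th ^+ k by exact: exprn_gt0.
have h1 : 0 < th ^+ k * (e * (1 + k%:R * h) - B) by rewrite mulr_gt0 // subr_gt0.
have h2 : 0 <= e * (1 - th ^+ k * (1 + k%:R * h)) by rewrite mulr_ge0 ?subr_ge0 // ltW.
lra.
Qed.

Section Abs.
Variables (R : realType) (C : fieldType) (v : C -> R).
Hypothesis hv : nonarch_abs v.

Lemma vge0 x : 0 <= v x. Proof. exact: (abs_ge0 hv x). Qed.
Lemma v0 : v 0 = 0. Proof. by apply/(abs_eq0 hv). Qed.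
Lemma veq0 x : (v x == 0) = (x == 0).
Proof. apply/eqP/eqP => [/(abs_eq0 hv)//|->]; exact: v0. Qed.
Lemma vgt0 x : x != 0 -> 0 < v x.
Proof. by move=> nz; rewrite lt_def veq0 nz vge0. Qed.
Lemma vM x y : v (x * y) = v x * v y. Proof. exact: (abs_mul hv x y). Qed.
Lemma v1 : v 1 = 1.
Proof.
have h : v 1 * v 1 = v 1 by rewrite -vM mulr1.
have nz : v 1 != 0 by rewrite veq0 oner_neq0.
by apply: (mulfI nz); rewrite h mulr1.
Qed.
Lemma vN x : v (- x) = v x.
Proof.
have h1 : v (-1) * v (-1) = 1 by rewrite -vM mulrNN mulr1 v1.
have h2 : v (-1) = 1.
  have ge := vge0 (-1).
  have : (v (-1) - 1) * (v (-1) + 1) = 0 by rewrite mulrDr !mulrBl h1; ring.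
  move/eqP; rewrite mulf_eq0 => /orP[]; first by rewrite subr_eq0 => /eqP.
  by move=> h; exfalso; move: h; rewrite gt_eqF // ltr_wpDl.
by rewrite -mulN1r vM h2 mul1r.
Qed.
Lemma vV x : v (x^-1) = (v x)^-1.
Proof.
have [->|nz] := eqVneq x 0; first by rewrite invr0 v0 invr0.
have h : v x * v (x^-1) = 1 by rewrite -vM mulfV // v1.
have nzv : v x != 0 by rewrite veq0.
by apply: (mulfI nzv); rewrite h mulfV.
Qed.
Lemma vD x y : v (x + y) <= Num.max (v x) (v y). Proof. exact: (abs_ultra hv x y). Qed.
Lemma vB x y : v (x - y) <= Num.max (v x) (v y).
Proof. by rewrite -(vN y) vD. Qed.
Lemma vBC x y : v (x - y) = v (y - x).
Proof. by rewrite -vN opprB. Qed.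
Lemma vD_le x y b : v x <= b -> v y <= b -> v (x + y) <= b.
Proof. by move=> h1 h2; apply: le_trans (vD x y) _; rewrite ge_max h1 h2. Qed.
Lemma vB_le x y b : v x <= b -> v y <= b -> v (x - y) <= b.
Proof. by move=> h1 h2; apply: vD_le; rewrite ?vN. Qed.
Lemma vD_lt x y b : v x < b -> v y < b -> v (x + y) < b.
Proof. by move=> h1 h2; apply: le_lt_trans (vD x y) _; rewrite gt_max h1 h2. Qed.
Lemma vD_eq x y : v x < v y -> v (x + y) = v y.
Proof.
move=> lt; apply/eqP; rewrite eq_le; apply/andP; split.
  by apply: le_trans (vD x y) _; rewrite ge_max (ltW lt) lexx.
have : v y <= Num.max (v (x + y)) (v x).
  by have := vD (x + y) (- x); rewrite vN addrC addKr.
rewrite le_max => /orP[//|h]; exfalso; by move: lt; rewrite ltNge h.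
Qed.
Lemma vD_eq' x y : v y < v x -> v (x + y) = v x.
Proof. by rewrite addrC; apply: vD_eq. Qed.
Lemma vnat n : v (n%:R) <= 1.
Proof.
elim: n => [|n ih]; first by rewrite v0 ler01.
by rewrite -addn1 natrD; apply: vD_le => //; rewrite v1.
Qed.
Lemma vX x n : v (x ^+ n) = v x ^+ n.
Proof. by elim: n => [|n ih]; rewrite ?expr0 ?v1 // !exprS vM ih. Qed.
Lemma vdiv x y : v (x / y) = v x / v y.
Proof. by rewrite vM vV. Qed.


Definition Pv (u : C * C) : P1 C := if u.2 == 0 then None else Some (u.1 / u.2).
Definition vecP (z : P1 C) : C * C := if z is Some x then (x, 1) else (1, 0).
Definition vn (u : C * C) := Num.max (v u.1) (v u.2).
Definition wedge (a b : C * C) := a.1 * b.2 - a.2 * b.1.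
Definition nz (u : C * C) := (u.1 != 0) || (u.2 != 0).
Definition sc (c : C) (u : C * C) := (c * u.1, c * u.2).
Definition padd (a b : C * C) := (a.1 + b.1, a.2 + b.2).
Definition mv (A : 'M[C]_2) (u : C * C) :=
  (A ord0 ord0 * u.1 + A ord0 ord_max * u.2, A ord_max ord0 * u.1 + A ord_max ord_max * u.2).

Lemma Pv_vecP z : Pv (vecP z) = z.
Proof. by case: z => [x|]; rewrite /Pv /= ?eqxx ?oner_eq0 ?divr1. Qed.
Lemma nz_vecP z : nz (vecP z).
Proof. by case: z => [x|]; rewrite /nz /= oner_eq0 ?orbT. Qed.
Lemma mobiusE A z : mobius A z = Pv (mv A (vecP z)).
Proof. by case: z => [x|]; rewrite /mobius /Pv /mv /= ?mulr1 ?mulr0 ?addr0. Qed.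
Lemma Pv_sc c u : c != 0 -> Pv (sc c u) = Pv u.
Proof.
move=> cnz; rewrite /Pv /sc /= mulf_eq0 (negbTE cnz) /=.
by case: eqP => // _; rewrite -mulf_div divff // mul1r.
Qed.
Lemma vn_ge0 u : 0 <= vn u.
Proof. by rewrite /vn le_max vge0. Qed.
Lemma vn_sc c u : vn (sc c u) = v c * vn u.
Proof. by rewrite /vn /sc /= !vM maxr_pMr // vge0. Qed.
Lemma vn_gt0 u : nz u -> 0 < vn u.
Proof. by case/orP => h; rewrite /vn lt_max (vgt0 h) ?orbT. Qed.
Lemma vecP_Pv u : nz u -> exists2 c, c != 0 & vecP (Pv u) = sc c u.
Proof.
rewrite /nz /Pv; case: (eqVneq u.2 0) => [e|ne] /=.
  rewrite orbF => h; exists (u.1^-1); first by rewrite invr_eq0.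
  by rewrite /sc mulVf // e mulr0.
move=> _; exists (u.2^-1); first by rewrite invr_eq0.
by rewrite /sc mulVf // mulrC.
Qed.
Lemma vn_le u b : v u.1 <= b -> v u.2 <= b -> vn u <= b.
Proof. by move=> h1 h2; rewrite /vn ge_max h1 h2. Qed.
Lemma vn_ge1 u : v u.1 <= vn u. Proof. by rewrite /vn le_max lexx. Qed.
Lemma vn_ge2 u : v u.2 <= vn u. Proof. by rewrite /vn le_max lexx orbT. Qed.

Lemma chordE a b : nz a -> nz b -> chord v (Pv a) (Pv b) = v (wedge a b) / (vn a * vn b).
Proof.
rewrite /nz /Pv /wedge /vn.
case: a => a1 a2; case: b => b1 b2 /=.
have aux : forall x y : C, y != 0 -> Num.max 1 (v (x / y)) = Num.max (v x) (v y) / v y.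
  move=> x y ny; have vy : 0 < v y by apply: vgt0.
  rewrite maxr_pMl ?invr_ge0 ?ltW // divff ?gt_eqF // vdiv maxC //.
case: (eqVneq a2 0) => [->|na]; case: (eqVneq b2 0) => [->|nb] /=; rewrite ?orbF.
- by rewrite !mulr0 mul0r subrr v0 mul0r.
- move=> na1 _; rewrite aux // ?v0 ?mul0r ?subr0 [Num.max (v a1) 0]max_l ?vge0 // vM.
  have h1 : 0 < v a1 by apply: vgt0.
  have h2 : 0 < v b2 by apply: vgt0.
  have h3 : 0 < Num.max (v b1) (v b2) by rewrite lt_max h2 orbT.
  field; rewrite ?gt_eqF //.
- move=> _ nb1; rewrite aux // ?v0 ?mulr0 ?sub0r [Num.max (v b1) 0]max_l ?vge0 // vN vM.
  have h1 : 0 < v b1 by apply: vgt0.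
  have h2 : 0 < v a2 by apply: vgt0.
  have h3 : 0 < Num.max (v a1) (v a2) by rewrite lt_max h2 orbT.
  field; rewrite ?gt_eqF //.
- move=> _ _; rewrite !aux //.
  have -> : a1 / a2 - b1 / b2 = (a1 * b2 - a2 * b1) / (a2 * b2) by field; rewrite ?na ?nb. 
  have h1 : 0 < v a2 by apply: vgt0.
  have h2 : 0 < v b2 by apply: vgt0.
  have h3 : 0 < Num.max (v a1) (v a2) by rewrite lt_max h1 orbT.
  have h4 : 0 < Num.max (v b1) (v b2) by rewrite lt_max h2 orbT.
  rewrite vdiv vM; field; rewrite ?gt_eqF //.
Qed.

Lemma wedge_le a b : v (wedge a b) <= vn a * vn b.
Proof.
rewrite /wedge; apply: vB_le; rewrite vM; apply: ler_pM; rewrite ?vge0 ?vn_ge1 ?vn_ge2 //.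
Qed.
Lemma chord_vec z w : chord v z w = v (wedge (vecP z) (vecP w)) / (vn (vecP z) * vn (vecP w)).
Proof. by rewrite -chordE ?nz_vecP // !Pv_vecP. Qed.
Lemma chord_ge0 z w : 0 <= chord v z w.
Proof. by rewrite chord_vec divr_ge0 ?mulr_ge0 ?vge0 ?vn_ge0. Qed.
Lemma chord_le1 z w : chord v z w <= 1.
Proof.
rewrite chord_vec ler_pdivrMr ?mul1r ?wedge_le //.
by rewrite mulr_gt0 ?vn_gt0 ?nz_vecP.
Qed.
Lemma wedgeC a b : wedge b a = - wedge a b.
Proof. by rewrite /wedge opprB mulrC [b.2 * _]mulrC. Qed.
Lemma chord_sym z w : chord v z w = chord v w z.
Proof. by rewrite !chord_vec wedgeC vN [vn _ * _]mulrC. Qed.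

Lemma max_cases (x y : R) : Num.max x y = x \/ Num.max x y = y.
Proof. by rewrite maxEle; case: ifP; [right|left]. Qed.

Lemma chord_ultra x y z : chord v x z <= Num.max (chord v x y) (chord v y z).
Proof.
rewrite !chord_vec.
move: (nz_vecP x) (nz_vecP y) (nz_vecP z).
move: (vecP x) (vecP y) (vecP z) => a b c na nb nc.
have pA := vn_gt0 na; have pB := vn_gt0 nb; have pC := vn_gt0 nc.
set X := v (wedge a c); set Y := v (wedge a b); set Z := v (wedge b c).
have key : X * vn b <= Num.max (Y * vn c) (Z * vn a).
  have comp : forall (f : C * C -> C), (f = fst \/ f = snd) ->
      X * v (f b) <= Num.max (Y * vn c) (Z * vn a).
    move=> f hf.
    have e : wedge a c * f b = wedge a b * f c + wedge b c * f a.
      by case: hf => ->; rewrite /wedge; ring.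
    rewrite /X -vM e; apply: le_trans (vD _ _) _; rewrite !vM.
    have hfc : v (f c) <= vn c by case: hf => ->; rewrite ?vn_ge1 ?vn_ge2.
    have hfa : v (f a) <= vn a by case: hf => ->; rewrite ?vn_ge1 ?vn_ge2.
    rewrite ge_max; apply/andP; split; rewrite le_max; [apply/orP; left|apply/orP; right];
      by apply: ler_pM; rewrite ?vge0.
  by rewrite /vn maxr_pMr ?vge0 // ge_max (comp fst (or_introl erefl)) (comp snd (or_intror erefl)).
have e1 : X / (vn a * vn c) = (X * vn b) / (vn a * vn b * vn c).
  by field; rewrite !gt_eqF.
have e2 : Y / (vn a * vn b) = (Y * vn c) / (vn a * vn b * vn c).
  by field; rewrite !gt_eqF.
have e3 : Z / (vn b * vn c) = (Z * vn a) / (vn a * vn b * vn c).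
  by field; rewrite !gt_eqF.
rewrite e1 e2 e3 -maxr_pMl; last by rewrite invr_ge0 !mulr_ge0 ?ltW.
by rewrite ler_pM2r // invr_gt0 !mulr_gt0.
Qed.

Lemma nz_vn u : 0 < vn u -> nz u.
Proof.
rewrite /nz /vn; case: (eqVneq u.1 0) => [->|//]; case: (eqVneq u.2 0) => [->|//].
by rewrite v0 maxxx ltxx.
Qed.

Lemma chord_shift u d : nz u -> chord v (Pv (padd u d)) (Pv u) <= vn d / vn u.
Proof.
move=> nu; have pu := vn_gt0 nu.
case: (ltP (vn d) (vn u)) => hd; last first.
  apply: le_trans (chord_le1 _ _) _; by rewrite ler_pdivlMr // mul1r.
have evn : vn (padd u d) = vn u.
  have c1 : v (u.1 + d.1) <= vn u.
    by apply: vD_le; [exact: vn_ge1|apply: le_trans (ltW hd); exact: vn_ge1].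
  have c2 : v (u.2 + d.2) <= vn u.
    by apply: vD_le; [exact: vn_ge2|apply: le_trans (ltW hd); exact: vn_ge2].
  apply/eqP; rewrite eq_le vn_le //=.
  case: (max_cases (v u.1) (v u.2)) => e.
  - have h1 : v d.1 < v u.1 by apply: le_lt_trans (vn_ge1 d) _; rewrite -e; exact: hd.
    by rewrite /vn /padd /= vD_eq' // e le_max lexx.
  - have h1 : v d.2 < v u.2 by apply: le_lt_trans (vn_ge2 d) _; rewrite -e; exact: hd.
    by rewrite /vn /padd /= [v (u.2 + _)]vD_eq' // e le_max lexx orbT.
have npd : nz (padd u d) by apply: nz_vn; rewrite evn.
rewrite chordE // evn.
have -> : wedge (padd u d) u = wedge d u by rewrite /wedge /padd /=; ring.
rewrite ler_pdivrMr ?mulr_gt0 // mulrA divfK ?gt_eqF //.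
exact: wedge_le.
Qed.

Definition mn (A : 'M[C]_2) :=
  Num.max (Num.max (v (A ord0 ord0)) (v (A ord0 ord_max)))
          (Num.max (v (A ord_max ord0)) (v (A ord_max ord_max))).

Lemma ord2 (i : 'I_2) : i = ord0 \/ i = ord_max.
Proof. by case: i => [[|[|k]] Hk]; [left; apply: val_inj|right; apply: val_inj|]. Qed.

Lemma mn_ge (A : 'M[C]_2) i j : v (A i j) <= mn A.
Proof. by case: (ord2 i) => ->; case: (ord2 j) => ->; rewrite /mn !le_max lexx ?orbT. Qed.
Lemma mn_le (A : 'M[C]_2) b : (forall i j, v (A i j) <= b) -> mn A <= b.
Proof. by move=> h; rewrite /mn !ge_max !h. Qed.
Lemma mn_ge0 (A : 'M[C]_2) : 0 <= mn A.
Proof. exact: le_trans (vge0 _) (mn_ge A ord0 ord0). Qed.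

Lemma mul2E (A B : 'M[C]_2) i j : (A *m B) i j = A i ord0 * B ord0 j + A i ord_max * B ord_max j.
Proof.
rewrite !mxE !big_ord_recl big_ord0 addr0.
by have -> : lift ord0 (ord0 : 'I_1) = ord_max :> 'I_2 by apply: val_inj.
Qed.

Lemma mn_mul (A B : 'M[C]_2) : mn (A *m B) <= mn A * mn B.
Proof.
apply: mn_le => i j; rewrite mul2E; apply: vD_le; rewrite vM;
  by apply: ler_pM; rewrite ?vge0 ?mn_ge.
Qed.
Lemma mn_add (A B : 'M[C]_2) : mn (A + B) <= Num.max (mn A) (mn B).
Proof.
apply: mn_le => i j; rewrite mxE; apply: vD_le; apply: le_trans (mn_ge _ i j) _;
  by rewrite le_max lexx ?orbT.
Qed.
Lemma mn_add_le (A B : 'M[C]_2) b : mn A <= b -> mn B <= b -> mn (A + B) <= b.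
Proof. by move=> h1 h2; apply: le_trans (mn_add A B) _; rewrite ge_max h1 h2. Qed.
Lemma mn_opp (A : 'M[C]_2) : mn (- A) = mn A.
Proof. by rewrite /mn !mxE !vN. Qed.
Lemma mn_scale c (A : 'M[C]_2) : mn (c *: A) = v c * mn A.
Proof. by rewrite /mn !mxE !vM !maxr_pMr ?vge0. Qed.
Lemma mn_nat n (A : 'M[C]_2) : mn (A *+ n) <= v n%:R * mn A.
Proof. by rewrite -scaler_nat mn_scale. Qed.
Lemma mn_one : mn (1%:M : 'M[C]_2) = 1.
Proof.
rewrite /mn !mxE /= v1 v0.
by rewrite (max_l (@ler01 R)) (max_r (@ler01 R)) maxxx.
Qed.

Lemma mv_mul (A B : 'M[C]_2) u : mv (A *m B) u = mv A (mv B u).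
Proof. by rewrite /mv !mul2E /=; congr pair; ring. Qed.
Lemma mv_scale c (A : 'M[C]_2) u : mv (c *: A) u = sc c (mv A u).
Proof. by rewrite /mv /sc !mxE /=; congr pair; ring. Qed.
Lemma mv_one u : mv 1%:M u = u.
Proof. by case: u => a b; rewrite /mv !mxE /= mul1r mul0r addr0 mul0r add0r mul1r. Qed.
Lemma mv_add (A B : 'M[C]_2) u : mv (A + B) u = padd (mv A u) (mv B u).
Proof. by rewrite /mv /padd !mxE /=; congr pair; ring. Qed.
Lemma vn_mv (A : 'M[C]_2) u : vn (mv A u) <= mn A * vn u.
Proof.
apply: vn_le; apply: vD_le; rewrite vM; apply: ler_pM; rewrite ?vge0 ?mn_ge ?vn_ge1 ?vn_ge2 //.
Qed.

Lemma mn0 : mn (0 : 'M[C]_2) = 0.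
Proof. by rewrite /mn !mxE v0 !maxxx. Qed.
Lemma mn_mulr (A B : 'M[C]_2) : mn (A * B) <= mn A * mn B.
Proof. by rewrite -mulmxE mn_mul. Qed.

Lemma pow_R (Y : 'M[C]_2) n : mn Y <= 1 ->
  exists Rn, (1 + Y) ^+ n = 1 + Y *+ n + Rn /\ mn Rn <= mn Y ^+ 2.
Proof.
move=> hY; elim: n => [|n [Rn [e h]]].
  by exists 0; rewrite expr0 mulr0n !addr0 mn0 exprn_ge0 // mn_ge0.
exists ((Y *+ n) * Y + Rn + Rn * Y); split.
  rewrite exprSr e !mulrDl !mulrDr !mul1r !mulr1 mulrSr.
  rewrite -!addrA; congr (_ + _); rewrite !addrA; congr (_ + _).
  rewrite [Y *+ n + Y]addrC -!addrA; congr (_ + _).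
have m0 := mn_ge0 Y.
apply: mn_add_le; first apply: mn_add_le.
- apply: le_trans (mn_mulr _ _) _; rewrite expr2; apply: ler_wpM2r => //.
  by apply: le_trans (mn_nat _ _) _; rewrite ler_piMl ?vnat.
- done.
- apply: le_trans (mn_mulr _ _) _; apply: le_trans (_ : mn Y ^+ 2 * 1 <= _).
    by apply: ler_pM; rewrite ?mn_ge0.
  by rewrite mulr1.
Qed.

Lemma pow_p (Y : 'M[C]_2) (p : nat) : mn Y <= 1 ->
  exists Z, (1 + Y) ^+ p = 1 + Z /\ mn Z <= Num.max (v p%:R) (mn Y) * mn Y.
Proof.
move=> hY; have [Rn [e h]] := pow_R p hY.
exists (Y *+ p + Rn); split; first by rewrite e addrA.
have m0 := mn_ge0 Y.
apply: mn_add_le.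
  apply: le_trans (mn_nat _ _) _; apply: ler_wpM2r => //; by rewrite le_max lexx.
apply: le_trans h _; rewrite expr2; apply: ler_wpM2r => //; by rewrite le_max lexx orbT.
Qed.

Lemma pow_pk (Y : 'M[C]_2) (p : nat) : mn Y < 1 -> v p%:R < 1 ->
  forall k, exists Z, (1 + Y) ^+ (p ^ k) = 1 + Z /\
     mn Z <= Num.max (v p%:R) (mn Y) ^+ k * mn Y.
Proof.
move=> hY hp; elim=> [|k [Z [e h]]].
  by exists Y; rewrite expn0 expr1 expr0 mul1r.
have m0 := mn_ge0 Y.
have th0 : 0 <= Num.max (v p%:R) (mn Y) by rewrite le_max m0 orbT.
have th1 : Num.max (v p%:R) (mn Y) <= 1 by rewrite ge_max (ltW hp) (ltW hY).
have hZ : mn Z <= mn Y.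
  by apply: le_trans h _; rewrite ler_piMl // exprn_ile1.
have hZ1 : mn Z <= 1 by apply: le_trans hZ (ltW hY).
have [Z' [e' h']] := pow_p p hZ1.
exists Z'; split; first by rewrite expnSr exprM e e'.
apply: le_trans h' _; rewrite exprS -mulrA; apply: ler_pM => //.
- by rewrite le_max vge0.
- exact: mn_ge0.
- rewrite ge_max; apply/andP; split; rewrite le_max ?lexx //.
  by rewrite hZ orbT.
Qed.


Lemma mv_sc (A : 'M[C]_2) c u : mv A (sc c u) = sc c (mv A u).
Proof. by rewrite /mv /sc /=; congr pair; ring. Qed.
Lemma sc_sc c c' u : sc c (sc c' u) = sc (c * c') u.
Proof. by rewrite /sc /= !mulrA. Qed.
Lemma mv_one' u : mv 1 u = u.
Proof. exact: mv_one. Qed.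
Lemma mv_pow_eig (M : 'M[C]_2) mu e : mv M e = sc mu e -> forall n, mv (M ^+ n) e = sc (mu ^+ n) e.
Proof.
move=> h; elim=> [|n ih]; first by rewrite expr0 mv_one' /sc /= !mul1r; case: e {h}.
by rewrite exprS -mulmxE mv_mul ih mv_sc h sc_sc -exprSr.
Qed.
Lemma wedge_refl u : wedge u u = 0.
Proof. by rewrite /wedge mulrC subrr. Qed.
Lemma chord_refl z : chord v z z = 0.
Proof. by rewrite chord_vec wedge_refl v0 mul0r. Qed.
Lemma Pv_eq_wedge a b : nz a -> nz b -> Pv a = Pv b -> wedge a b = 0.
Proof.
move=> na nb e; have := chordE na nb; rewrite e chord_refl => /esym /eqP.
rewrite mulf_eq0 invr_eq0 mulf_eq0 (gt_eqF (vn_gt0 na)) (gt_eqF (vn_gt0 nb)) /= ?orbF veq0 => /eqP //.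
Qed.
Lemma wedge0_prop a b : nz a -> wedge a b = 0 -> exists k, b = sc k a.
Proof.
case: a => a1 a2; case: b => b1 b2; rewrite /nz /wedge /sc /= => na hw.
case: (eqVneq a1 0) => [e1|n1].
  rewrite e1 eqxx /= in na; exists (b2 / a2); rewrite e1 mulr0 divfK //.
  move: hw; rewrite e1 mul0r sub0r => /eqP; rewrite oppr_eq0 mulf_eq0 (negbTE na) /= => /eqP ->.
  done.
exists (b1 / a1); rewrite divfK //; congr pair.
apply: (mulIf n1); rewrite mulrAC divfK //; apply/eqP; rewrite -subr_eq0; apply/eqP.
by rewrite -hw; ring.
Qed.

Lemma spart (M : 'M[C]_2) (hcl : GRing.closed_field_axiom C) (p : nat) (hp : v p%:R < 1)
   (z : P1 C) (w : C) :
   M ord0 ord0 * M ord_max ord_max - M ord0 ord_max * M ord_max ord0 != 0 ->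
  (exists f, f != z /\ forall n, mobius (M ^+ n) f = f) \/
  (forall e, 0 < e -> exists K, forall k, (K <= k)%N ->
        chord v (mobius (M ^+ (p ^ k)) (Some w)) (Some w) < e).
Proof.
set a := M ord0 ord0; set b := M ord0 ord_max; set c := M ord_max ord0; set d := M ord_max ord_max.
move=> hdet.
have [l hl] := hcl 2%N (fun i => if i == 0%N then - (a * d - b * c) else a + d) isT.
rewrite !big_ord_recl big_ord0 /= expr0 expr1 mulr1 addr0 in hl.
have HC : l ^+ 2 - (a + d) * l + (a * d - b * c) = 0.
  by rewrite hl; ring.
have lnz : l != 0.
  apply/negP => /eqP l0; move: HC; rewrite l0 expr0n /= mulr0 !sub0r oppr0 add0r => /eqP.
  by rewrite (negbTE hdet).
have munz : a + d - l != 0.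
  apply/negP => /eqP m0; move/eqP: hdet; apply.
  have : l * (a + d - l) = a * d - b * c.
    apply/eqP; rewrite -subr_eq0; apply/eqP; transitivity (- (l ^+ 2 - (a + d) * l + (a * d - b * c))); [ring | by rewrite HC oppr0].
  by rewrite m0 mulr0 => <-.
case: (eqVneq (a + d - 2%:R * l) 0) => htau.
- right.
  have ed : d = 2%:R * l - a.
    by apply/eqP; rewrite -subr_eq0; apply/eqP; rewrite -htau; ring.
  have hbc : b * c + (a - l) ^+ 2 = 0.
    transitivity (- (l ^+ 2 - (a + d) * l + (a * d - b * c))); [rewrite ed; ring | by rewrite HC oppr0].
  set Nv := fun u : C * C => ((a - l) * u.1 + b * u.2, c * u.1 + (d - l) * u.2).
  have formula : forall n u, mv (M ^+ n) u = sc (l ^+ n) (padd u (sc (n%:R / l) (Nv u))).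
    move=> n u; elim: n => [|n ih].
      rewrite expr0 mv_one' /sc /padd /= !mul0r !mul1r !addr0.
      by case: u.
    rewrite exprS -mulmxE mv_mul ih.
    rewrite /mv /sc /padd /Nv /= -/a -/b -/c -/d; congr pair.
    + apply/eqP; rewrite -subr_eq0; apply/eqP.
      transitivity (l ^+ n * (n%:R / l) * u.1 * (b * c + (a - l) ^+ 2)).
        rewrite ed exprS -natr1; field; exact: lnz.
      by rewrite hbc mulr0.
    + apply/eqP; rewrite -subr_eq0; apply/eqP.
      transitivity (l ^+ n * (n%:R / l) * u.2 * (b * c + (a - l) ^+ 2)).
        rewrite ed exprS -natr1; field; exact: lnz.
      by rewrite hbc mulr0.
  move=> e e0.
  set u := vecP (Some w).
  have nu : nz u by exact: nz_vecP.
  set B := v (l^-1) * vn (Nv u) / vn u.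
  have B0 : 0 <= B by rewrite /B !mulr_ge0 ?invr_ge0 ?vge0 ?vn_ge0.
  have [K hK] := geo (vge0 p%:R) hp B0 e0.
  exists K => k hk.
  rewrite mobiusE formula Pv_sc ?expf_neq0 // -/u.
  rewrite -[X in chord v _ X](Pv_vecP (Some w)) -/u.
  apply: le_lt_trans (chord_shift _ nu) _.
  apply: le_lt_trans (hK k hk).
  rewrite vn_sc vdiv natrX vX /B !mulrA; apply: ler_wpM2r; first by rewrite invr_ge0 vn_ge0.
  by rewrite vV.
- left.
  have hcz : forall (k X : C), X = k * (l ^+ 2 - (a + d) * l + (a * d - b * c)) -> X = 0.
    by move=> k X ->; rewrite HC mulr0.
  set mu := a + d - l.
  set e1 := if (a - l != 0) || (b != 0) then (b, l - a) else (d - l, - c).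
  set e2 := if (a - l != 0) || (c != 0) then (a - l, c) else (b, d - l).
  have E1 : mv M e1 = sc l e1.
    rewrite /e1 /mv /sc -/a -/b -/c -/d; case: ifP => _ /=; congr pair;
      apply/eqP; rewrite -subr_eq0; apply/eqP.
    + by apply: (hcz 0); ring.
    + by apply: (hcz (-1)); ring.
    + by apply: (hcz 1); ring.
    + by apply: (hcz 0); ring.
  have E2 : mv M e2 = sc mu e2.
    rewrite /e2 /mv /sc /mu -/a -/b -/c -/d; case: ifP => _ /=; congr pair;
      apply/eqP; rewrite -subr_eq0; apply/eqP.
    + by apply: (hcz (-1)); ring.
    + by apply: (hcz 0); ring.
    + by apply: (hcz 0); ring.
    + by apply: (hcz (-1)); ring.
  have dl : d - l = a + d - 2%:R * l - (a - l) by ring.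
  have n1 : nz e1.
    rewrite /e1 /nz; case: ifP => /= h.
      have hla : (a - l != 0) -> (l - a != 0) by rewrite subr_eq0 eq_sym -subr_eq0.
      by case/orP: h => h; rewrite ?h ?orbT // hla ?orbT.
    move/negbT: h; rewrite negb_or !negbK => /andP[/eqP h1 /eqP h2].
    by rewrite dl h1 subr0 htau.
  have n2 : nz e2.
    rewrite /e2 /nz; case: ifP => /= h; first by [].
    move/negbT: h; rewrite negb_or !negbK => /andP[/eqP h1 /eqP h2].
    by rewrite dl h1 subr0 htau orbT.
  have dist : Pv e1 != Pv e2.
    apply/negP => /eqP hE.
    have [k ek] := wedge0_prop n1 (Pv_eq_wedge n1 n2 hE).
    have : sc mu e2 = sc l e2.
      by rewrite -E2 ek mv_sc E1 !sc_sc mulrC.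
    rewrite /sc => -[h1 h2].
    move/eqP: htau; apply.
    have : mu = l.
      by case/orP: n2 => hn; [exact: (mulIf hn h1) | exact: (mulIf hn h2)].
    by rewrite /mu => /eqP; rewrite subr_eq => /eqP ->; ring.
  have fixe : forall e k, nz e -> k != 0 -> mv M e = sc k e ->
      forall n, mobius (M ^+ n) (Pv e) = Pv e.
    move=> e k ne kn h n; rewrite mobiusE; have [c' cn ->] := vecP_Pv ne.
    by rewrite mv_sc (mv_pow_eig h) sc_sc Pv_sc // mulf_neq0 // expf_neq0.
  case: (eqVneq (Pv e1) z) => hz.
    exists (Pv e2); split; first by rewrite -hz eq_sym.
    exact: (fixe e2 mu n2 munz E2).
  exists (Pv e1); split => //.
  exact: (fixe e1 l n1 lnz E1).
Qed.

Lemma vB_neq x y : v x != v y -> v (x - y) = Num.max (v x) (v y).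
Proof.
move=> ne; case: (ltgtP (v x) (v y)) => h.
- by rewrite vD_eq ?vN // max_r // ltW.
- by rewrite vD_eq' ?vN // max_l // ltW.
- by rewrite h eqxx in ne.
Qed.

Lemma gen_point (K : C -> Prop) (hK : local_subfield v K) (hcl : GRing.closed_field_axiom C) :
  exists w, [/\ ~ K w, 0 < v w, v w < 1 &
    forall k, K k.1 -> K k.2 -> nz k -> v w <= chord v (Some w) (Pv k)].
Proof.
have [pi [Kpi vpi0 vpi1 hdisc]] := ls_discrete hK.
have [w hw] := hcl 2%N (fun i => if i == 0%N then pi else 0) isT.
rewrite !big_ord_recl big_ord0 /= expr0 mulr1 mul0r !addr0 in hw.
have vw2 : v w ^+ 2 = v pi by rewrite -vX hw.
have w0 : 0 < v w.
  rewrite lt_def vge0 andbT; apply/negP => /eqP h; move: vw2; rewrite h expr0n /= => e.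
  by move: vpi0; rewrite -e ltxx.
have w1 : v w < 1.
  rewrite ltNge; apply/negP => h; move: vpi1; rewrite -vw2 ltNge; apply/negP/negPn.
  by rewrite exprn_ege1.
have key : forall k1 k2, K k1 -> K k2 -> k2 != 0 -> v (w * k2) != v k1.
  move=> k1 k2 K1 K2 n2; apply/negP => /eqP e.
  have k1n : k1 != 0.
    apply/negP => /eqP e1; move: e; rewrite e1 v0 vM => /eqP; rewrite mulf_eq0.
    by rewrite (gt_eqF w0) (gt_eqF (vgt0 n2)).
  have Kq : K (k1 / k2) by apply: (sfM (ls_subfield hK)) => //; apply: (sfV (ls_subfield hK)).
  have qn : k1 / k2 != 0 by rewrite mulf_neq0 ?invr_eq0.
  have [z hz] := hdisc _ Kq qn.
  have vq : v (k1 / k2) = v w by rewrite vdiv -e vM mulfK // gt_eqF ?vgt0.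
  have : v pi ^ (z * 2%:Z) = v pi ^ (1 : int).
    by rewrite -exprz_exp -hz vq expr1z -vw2.
  move/(ieexprIz vpi0 (negbT (lt_eqF vpi1))) => hz2.
  lia.
exists w; split => //.
- move=> Kw; have := key w 1 Kw (sf1 (ls_subfield hK)) (oner_neq0 C).
  by rewrite mulr1 eqxx.
- move=> [k1 k2] K1 K2 nk; simpl in K1, K2.
  have -> : Some w = Pv (w, 1) by rewrite /Pv /= oner_eq0 divr1.
  rewrite chordE //; last by rewrite /nz /= oner_eq0 orbT.
  have vn1 : vn (w, 1) = 1 by rewrite /vn /= v1 max_r // ltW.
  rewrite vn1 mul1r /wedge /= mul1r ler_pdivlMr ?vn_gt0 //.
  case: (eqVneq k2 0) => [e2|n2].
    rewrite e2 mulr0 sub0r vN /vn /= v0 max_l ?vge0 // ler_piMl ?vge0 // ltW //.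
  rewrite vB_neq ?key // /vn /= vM maxr_pMr ?vge0 // ge_max; apply/andP; split; rewrite le_max.
    by apply/orP; right; rewrite ler_piMl ?vge0 // ltW.
  by rewrite lexx.
Qed.


Lemma ydist (K : C -> Prop) (hK : local_subfield v K) y : ~ K y ->
  exists d, [/\ 0 < d, d <= 1 & forall k1 k2, K k1 -> K k2 -> d * vn (k1, k2) <= v (y * k2 - k1)].
Proof.
move=> nKy.
have [d0 [d0p hd0]] : exists d0, 0 < d0 /\ forall x, K x -> d0 <= v (y - x).
  apply: NNPP => hn.
  have H : forall n : nat, exists x, K x /\ v (y - x) < (n.+1%:R)^-1.
    move=> n; apply: NNPP => hx; apply: hn; exists ((n.+1%:R)^-1); split.
      by rewrite invr_gt0 ltr0n.
    move=> x Kx; rewrite leNgt; apply/negP => hlt; apply: hx; by exists x.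
  pose u n := proj1_sig (boolp.constructive_indefinite_description (H n)).
  have hu : forall n, K (u n) /\ v (y - u n) < (n.+1%:R)^-1.
    by move=> n; rewrite /u; case: boolp.constructive_indefinite_description.
  apply: nKy; apply: (ls_closed hK (u := u)); first by move=> n; case: (hu n).
  move=> e e0; exists (Num.Def.archi_bound (e^-1)) => n hnN.
  rewrite vBC; apply: lt_le_trans (proj2 (hu n)) _.
  rewrite -[e]invrK lef_pV2 ?posrE ?invr_gt0 ?ltr0n //.
  apply: le_trans (ltW (archi_boundP _)) _; first by rewrite invr_ge0 ltW.
  by rewrite ler_nat; apply: leq_trans hnN _.
set d0' := Num.min d0 1; set Y := Num.max 1 (v y).
have d0'p : 0 < d0' by rewrite /d0' lt_min d0p ltr01.
have d0'1 : d0' <= 1 by rewrite /d0' ge_min lexx orbT.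
have d0'd : d0' <= d0 by rewrite /d0' ge_min lexx.
have Y1 : 1 <= Y by rewrite /Y le_max lexx.
have Yp : 0 < Y by apply: lt_le_trans Y1; exact: ltr01.
exists (d0' / Y); split.
- by rewrite divr_gt0.
- by rewrite ler_pdivrMr // mul1r; apply: le_trans d0'1 Y1.
move=> k1 k2 K1 K2.
have dle1 : d0' / Y <= 1 by rewrite ler_pdivrMr // mul1r; apply: le_trans d0'1 Y1.
case: (eqVneq k2 0) => [->|n2].
  rewrite mulr0 sub0r vN /vn /= v0 max_l ?vge0 //.
  by rewrite ler_piMl ?vge0.
have A : d0' * v k2 <= v (y * k2 - k1).
  have -> : y * k2 - k1 = k2 * (y - k1 / k2) by field.
  rewrite vM mulrC ler_wpM2l ?vge0 //; apply: le_trans d0'd _; apply: hd0.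
  by apply: (sfM (ls_subfield hK)) => //; apply: (sfV (ls_subfield hK)).
case: (boolP (v k1 <= Y * v k2)) => h.
  apply: le_trans A; apply: (@le_trans _ _ (d0' / Y * (Y * v k2))).
    apply: ler_wpM2l; first by rewrite divr_ge0 ?ltW.
    by rewrite /vn /= ge_max h /= ler_peMl ?vge0.
  by rewrite mulrA divfK ?gt_eqF.
rewrite -ltNge in h.
have hk : v k2 < v k1.
  apply: le_lt_trans h; by rewrite ler_peMl ?vge0.
have hyk : v (y * k2) < v k1.
  apply: le_lt_trans h; rewrite vM ler_wpM2r ?vge0 //; by rewrite /Y le_max lexx orbT.
rewrite vB_neq ?(lt_eqF hyk) // (max_r (ltW hyk)) /vn /= (max_l (ltW hk)).
by rewrite ler_piMl ?vge0.
Qed.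


Definition dt (A : 'M[C]_2) := A ord0 ord0 * A ord_max ord_max - A ord0 ord_max * A ord_max ord0.

Lemma mv_nz (M : 'M[C]_2) u : dt M != 0 -> nz u -> nz (mv M u).
Proof.
move=> hd; apply: contraLR; rewrite /nz /mv /= !negb_or !negbK => /andP[/eqP h1 /eqP h2].
apply/andP; split.
- have : dt M * u.1 = M ord_max ord_max * (M ord0 ord0 * u.1 + M ord0 ord_max * u.2)
                      - M ord0 ord_max * (M ord_max ord0 * u.1 + M ord_max ord_max * u.2).
    by rewrite /dt; ring.
  by rewrite h1 h2 !mulr0 subrr => /eqP; rewrite mulf_eq0 (negbTE hd).
- have : dt M * u.2 = M ord0 ord0 * (M ord_max ord0 * u.1 + M ord_max ord_max * u.2)
                      - M ord_max ord0 * (M ord0 ord0 * u.1 + M ord0 ord_max * u.2).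
    by rewrite /dt; ring.
  by rewrite h1 h2 !mulr0 subrr => /eqP; rewrite mulf_eq0 (negbTE hd).
Qed.

Lemma mn_attain (M : 'M[C]_2) : exists i j, v (M i j) = mn M.
Proof.
rewrite /mn; case: (max_cases (Num.max (v (M ord0 ord0)) (v (M ord0 ord_max)))
   (Num.max (v (M ord_max ord0)) (v (M ord_max ord_max)))) => ->.
- case: (max_cases (v (M ord0 ord0)) (v (M ord0 ord_max))) => ->; by do 2 eexists.
- case: (max_cases (v (M ord_max ord0)) (v (M ord_max ord_max))) => ->; by do 2 eexists.
Qed.

Lemma lemD (K : C -> Prop) (hK : subfield K) (A : 'M[C]_2) (y : C) (d : R) :
  (forall i j, K (A i j)) -> mn A = 1 -> 0 < d ->
  (forall k1 k2, K k1 -> K k2 -> d * vn (k1, k2) <= v (y * k2 - k1)) ->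
  exists k, [/\ K k.1, K k.2, nz k &
     chord v (mobius A (Some y)) (Pv k) <= vn (y, 1) * v (dt A) / d].
Proof.
move=> KA mA d0 hy.
have mAe := mA; rewrite /mn in mAe.
rewrite mobiusE /dt.
move: (KA ord0 ord0) (KA ord0 ord_max) (KA ord_max ord0) (KA ord_max ord_max).
set a := A ord0 ord0; set b := A ord0 ord_max; set c := A ord_max ord0; set e := A ord_max ord_max.
move=> Ka Kb Kc Ke.
have u1 : 1 <= vn (y, 1) by rewrite /vn /= v1 le_max lexx orbT.
have Au1 : d * Num.max (v a) (v b) <= v (a * y + b).
  have := hy (- b) a (sfN hK Kb) Ka; rewrite /vn /= vN maxC.
  by have -> : y * a - - b = a * y + b by ring.
have Au2 : d * Num.max (v c) (v e) <= v (c * y + e).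
  have := hy (- e) c (sfN hK Ke) Kc; rewrite /vn /= vN maxC.
  by have -> : y * c - - e = c * y + e by ring.
have mvE : mv A (vecP (Some y)) = (a * y + b, c * y + e) by rewrite /mv /= !mulr1.
have vnAu : d <= vn (mv A (vecP (Some y))).
  rewrite mvE /vn /=.
  have : d * Num.max (Num.max (v a) (v b)) (Num.max (v c) (v e)) = d by rewrite mAe mulr1.
  move=> <-; rewrite maxr_pMr ?(ltW d0) // ge_max !le_max Au1 Au2 orbT //.
have nzAu : nz (mv A (vecP (Some y))) by apply: nz_vn; apply: lt_le_trans vnAu.
have hcol : vn (a, c) = 1 \/ vn (b, e) = 1.
  have [i [j hij]] := mn_attain A.
  have le0 : vn (a, c) <= 1 by rewrite -mA vn_le //= mn_ge.
  have le1 : vn (b, e) <= 1 by rewrite -mA vn_le //= mn_ge.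
  case: (ord2 j) => hj; [left|right]; apply/eqP; rewrite eq_le.
  - rewrite le0 /= -mA -hij hj; case: (ord2 i) => ->; first [exact: (vn_ge1 (a, c)) | exact: (vn_ge2 (a, c))].
  - rewrite le1 /= -mA -hij hj; case: (ord2 i) => ->; first [exact: (vn_ge1 (b, e)) | exact: (vn_ge2 (b, e))].
have fin : forall k, nz k -> vn k = 1 -> v (wedge (mv A (vecP (Some y))) k) <= vn (y, 1) * v (a * e - b * c) ->
    chord v (Pv (mv A (vecP (Some y)))) (Pv k) <= vn (y, 1) * v (a * e - b * c) / d.
  move=> k nk vk hw; rewrite chordE // vk mulr1.
  apply: le_trans (_ : v (wedge (mv A (vecP (Some y))) k) / d <= _).
    apply: ler_wpM2l; first exact: vge0.
    by rewrite lef_pV2 ?posrE // ?vn_gt0.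
  by rewrite ler_wpM2r // invr_ge0 ltW.
case: hcol => hc.
- have nk : nz (a, c) by apply: nz_vn; rewrite hc ltr01.
  exists (a, c); split => //; apply: fin => //.
  rewrite mvE /wedge /=.
  have -> : (a * y + b) * c - (c * y + e) * a = - (a * e - b * c) by ring.
  by rewrite vN ler_peMl ?vge0.
- have nk : nz (b, e) by apply: nz_vn; rewrite hc ltr01.
  exists (b, e); split => //; apply: fin => //.
  rewrite mvE /wedge /=.
  have -> : (a * y + b) * e - (c * y + e) * b = y * (a * e - b * c) by ring.
  by rewrite vM ler_wpM2r ?vge0 //; exact: (vn_ge1 (y, 1)).
Qed.




Lemma DB (K : C -> Prop) (hK : subfield K) (A : 'M[C]_2) (y w : C) (d : R) :
  (forall i j, K (A i j)) -> mn A = 1 -> 0 < d ->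
  (forall k1 k2, K k1 -> K k2 -> d * vn (k1, k2) <= v (y * k2 - k1)) ->
  (forall k, K k.1 -> K k.2 -> nz k -> v w <= chord v (Some w) (Pv k)) ->
  chord v (mobius A (Some y)) (Some w) < v w ->
  v w * d / vn (y, 1) <= v (dt A).
Proof.
move=> KA mA d0 hy gen hc.
have u1 : 1 <= vn (y, 1) by rewrite /vn /= v1 le_max lexx orbT.
have up : 0 < vn (y, 1) by apply: lt_le_trans u1; exact: ltr01.
rewrite leNgt; apply/negP => hlt.
have [k [K1 K2 nk hk]] := lemD hK KA mA d0 hy.
have hk' : chord v (mobius A (Some y)) (Pv k) < v w.
  apply: le_lt_trans hk _.
  move: hlt; rewrite ltr_pdivlMr // => hlt.
  by rewrite ltr_pdivrMr // [vn _ * _]mulrC.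
have := gen k K1 K2 nk.
rewrite leNgt => /negP; apply.
apply: le_lt_trans (chord_ultra _ (mobius A (Some y)) _) _.
by rewrite gt_max chord_sym hc.
Qed.

Lemma normalize (K : C -> Prop) (hK : subfield K) (M : 'M[C]_2) :
  (forall i j, K (M i j)) -> dt M != 0 ->
  exists sg, [/\ sg != 0, K sg & mn (sg *: M) = 1].
Proof.
move=> KM hd.
have [i [j h]] := mn_attain M.
have nz0 : M i j != 0.
  apply/negP => /eqP e0; move/eqP: hd; apply.
  have z : forall i' j', M i' j' = 0.
    move=> i' j'; apply/eqP; rewrite -veq0 eq_le vge0 andbT -v0 -e0 h; exact: mn_ge.
  by rewrite /dt !z mulr0 subrr.
exists (M i j)^-1; split.
- by rewrite invr_eq0.
- exact: (sfV hK).
- by rewrite mn_scale vV -h mulVf // veq0.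
Qed.

Lemma det2 (A : 'M[C]_2) : \det A = dt A.
Proof.
rewrite (expand_det_row _ ord0) !big_ord_recl big_ord0 addr0 /cofactor !det_mx11 !mxE /=.
have -> : lift ord0 (ord0 : 'I_1) = ord_max :> 'I_2 by apply: val_inj.
rewrite expr0 mul1r expr1 mulN1r mulrN /dt; congr (_ * _ - _ * _); apply: congr2; apply: val_inj => //.
Qed.


Lemma mobius_scale (c : C) (M : 'M[C]_2) z : c != 0 -> mobius (c *: M) z = mobius M z.
Proof. by move=> cn; rewrite !mobiusE mv_scale Pv_sc. Qed.

Definition adj2 (A : 'M[C]_2) : 'M[C]_2 :=
  \matrix_(i < 2, j < 2) (if i == ord0 then (if j == ord0 then A ord_max ord_max else - A ord0 ord_max)
                          else (if j == ord0 then - A ord_max ord0 else A ord0 ord0)).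

Lemma inv2 (A : 'M[C]_2) : dt A != 0 -> invmx A = (dt A)^-1 *: adj2 A.
Proof.
move=> hd.
have uA : A \in unitmx by rewrite unitmxE det2 unitfE.
have h : A *m ((dt A)^-1 *: adj2 A) = 1%:M.
  apply/matrixP => i j; rewrite mul2E !mxE /dt.
  case: (ord2 i) => ->; case: (ord2 j) => -> /=; field; exact: hd.
by rewrite -[invmx A]mulmx1 -h mulmxA mulVmx // mul1mx.
Qed.

Lemma mn_inv (A : 'M[C]_2) : dt A != 0 -> mn (invmx A) = (v (dt A))^-1 * mn A.
Proof.
move=> hd; rewrite inv2 // mn_scale vV; congr (_ * _).
apply/eqP; rewrite eq_le; apply/andP; split; apply: mn_le => i j.
- by case: (ord2 i) => ->; case: (ord2 j) => ->; rewrite !mxE /= ?vN mn_ge.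
- case: (ord2 i) => ->; case: (ord2 j) => ->.
  + by have := mn_ge (adj2 A) ord_max ord_max; rewrite !mxE.
  + by have := mn_ge (adj2 A) ord0 ord_max; rewrite !mxE /= vN.
  + by have := mn_ge (adj2 A) ord_max ord0; rewrite !mxE /= vN.
  + by have := mn_ge (adj2 A) ord0 ord0; rewrite !mxE.
Qed.

Lemma disc_le (K : C -> Prop) (pi : C) x : 0 < v pi -> v pi < 1 ->
  (forall x, K x -> x != 0 -> exists z : int, v x = v pi ^ z) ->
  K x -> v x < 1 -> v x <= v pi.
Proof.
move=> p0 p1 hd Kx x1.
have [->|xn] := eqVneq x 0; first by rewrite v0 ltW.
have [[n|n] hz] := hd x Kx xn.
- case: n hz => [|n] hz; first by move: x1; rewrite hz expr0z ltxx.
  by rewrite hz ler_iXnr // ltW.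
- exfalso; move: x1; rewrite hz /= ltNge; apply/negP/negPn.
  rewrite invf_ge1 ?exprn_gt0 //; apply: exprn_ile1; exact: ltW.
Qed.

Lemma approx (K : C -> Prop) (hK : local_subfield v K) (eta : R) : 0 < eta ->
  exists s : seq C, forall x, K x -> v x <= 1 -> exists2 r, r \in s & v (x - r) < eta.
Proof.
move=> e0.
have [pi [Kpi p0 p1 hd]] := ls_discrete hK.
have [s0 [hs0 hres]] := ls_finite_residue hK.
have sf := ls_subfield hK.
have step : forall n, exists s : seq C, forall x, K x -> v x <= 1 ->
    exists2 r, r \in s & v (x - r) <= v pi ^+ n.
  elim=> [|n [sn hsn]].
    by exists [:: 0] => x _ hx; exists 0; rewrite ?inE ?subr0 ?expr0.
  exists [seq r0 + pi * r | r0 <- s0, r <- sn] => x Kx hx.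
  have [r0 r0s hr0] := hres x Kx hx.
  have [Kr0 _] := hs0 r0 r0s.
  have Kd : K (x - r0) by apply: (sfD sf) => //; apply: (sfN sf).
  have pin : pi != 0 by rewrite -veq0 gt_eqF.
  have Kq : K ((x - r0) / pi) by apply: (sfM sf) => //; apply: (sfV sf).
  have vq : v ((x - r0) / pi) <= 1.
    rewrite vdiv ler_pdivrMr // mul1r; exact: (disc_le p0 p1 hd Kd hr0).
  have [r rs hr] := hsn _ Kq vq.
  exists (r0 + pi * r); first by apply/allpairsP; exists (r0, r).
  have -> : x - (r0 + pi * r) = pi * ((x - r0) / pi - r) by field.
  by rewrite vM exprS ler_wpM2l // ltW.
have [N hN] := geo (ltW p0) p1 (@ler01 R) e0.
have [sN hsN] := step N.
exists sN => x Kx hx; have [r rs hr] := hsN x Kx hx; exists r => //.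
by apply: le_lt_trans hr _; have := hN N (leqnn N); rewrite mulr1.
Qed.

Lemma vp_lt1 (p : nat) : Cp_setting v p -> v p%:R < 1.
Proof.
case=> _ _ _ _ [K0 [hK0 _ hp _]].
have [pi [Kpi p0 p1 hd]] := ls_discrete hK0.
case: hp => [/eqP -> | hp]; first by rewrite v0 ltr01.
have pin : pi != 0 by rewrite -veq0 gt_eqF.
have [z hz] := hp pi Kpi pin.
rewrite lt_def vnat andbT; apply/negP => /eqP e.
by move: p1; rewrite hz -e exp1rz ltxx.
Qed.

End Abs.

Section Grp.
Variables (C : fieldType) (S : finType) (F : S -> C -> Prop) (G : (S -> 'M[C]_2) -> Prop).
Hypothesis hG : PGL_subgroup F G.

Lemma G_det g t : G g -> \det (g t) != 0.
Proof. by move=> Gg; have [_ ] := sg_GL hG Gg t. Qed.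

Lemma G_unit g t : G g -> g t \is a GRing.unit.
Proof. by move=> Gg; rewrite -[_ \is a _]/(g t \in unitmx) unitmxE unitfE G_det. Qed.

Lemma G_pow g : G g -> forall n, G (fun t => g t ^+ n).
Proof.
move=> Gg; elim=> [|n ih].
  have -> : (fun t => g t ^+ 0) = @one_fam C S by apply: boolp.funext => t; rewrite expr0.
  exact: sg_1 hG.
have -> : (fun t => g t ^+ n.+1) = (fun t => g t *m g t ^+ n).
  by apply: boolp.funext => t; rewrite exprS -mulmxE.
exact (sg_M hG Gg ih).
Qed.

Lemma pow_distinct g a b : torsion_free G -> G g -> ~ proj_eq g (@one_fam C S) -> (a < b)%N ->
  ~ proj_eq (fun t => g t ^+ a) (fun t => g t ^+ b).
Proof.
move=> htf Gg ng ab H; apply: ng; refine (htf g (b - a)%N Gg _ _); first by rewrite subn_gt0.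
move=> t; have [l ln hl] := H t.
have u : g t ^+ a \is a GRing.unit by rewrite unitrX // G_unit.
have e : g t ^+ (b - a) = l *: 1.
  have : g t ^+ (b - a) * g t ^+ a = l *: g t ^+ a by rewrite -exprD subnK // ltnW.
  move=> h; rewrite -[LHS](mulrK u) h -scalerAl mulrV //.
exists l^-1; first by rewrite invr_eq0.
by rewrite /one_fam e scalerA mulVf // scale1r.
Qed.

Lemma E_nontriv gi gj : G gi -> G gj -> ~ proj_eq gi gj ->
  ~ proj_eq (fun t => invmx (gi t) *m gj t) (@one_fam C S).
Proof.
move=> Gi Gj nij H; apply: nij => t; have [l ln hl] := H t.
have ui : gi t \in unitmx by rewrite unitmxE unitfE G_det.
exists l^-1; first by rewrite invr_eq0.
have : gi t = l *: gj t.
  by move: hl; rewrite /one_fam => hl; rewrite -[gi t]mulmx1 hl scalemxAr mulmxA mulmxV // mul1mx.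
by move=> ->; rewrite scalerA mulVf // scale1r.
Qed.

End Grp.

Lemma pigeon (T : finType) (f : nat -> T) (J : nat) :
  exists i j, [/\ (J <= i)%N, (i < j)%N & f i = f j].
Proof.
pose g := fun k : 'I_(#|T|.+1) => f (J + k)%N.
have : ~~ injectiveb g.
  apply/negP => /injectiveP inj; have := leq_card g inj; by rewrite card_ord ltnn.
move/injectivePn => [x [y nxy e]].
case: (ltngtP x y) => h.
- by exists (J + x)%N, (J + y)%N; split; rewrite ?leq_addr ?ltn_add2l.
- by exists (J + y)%N, (J + x)%N; split; rewrite ?leq_addr ?ltn_add2l.
- by move: nxy; rewrite (val_inj h) eqxx.
Qed.

Lemma proj_eq_sym (C : fieldType) (S : finType) (g h : S -> 'M[C]_2) :
  proj_eq g h -> proj_eq h g.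
Proof.
move=> H t; have [l ln e] := H t; exists l^-1; first by rewrite invr_eq0.
by rewrite e scalerA mulVf // scale1r.
Qed.

Theorem lemma2p17 (p : nat) (R : realType) (C : fieldType) (v : C -> R)
    (hC : Cp_setting v p)
    (S : finType) (hS : (0 < #|S|)%N) (F : S -> C -> Prop)
    (hF : forall s, local_subfield v (F s))
    (G : (S -> 'M[C]_2) -> Prop)
    (hG : PGL_subgroup F G) (htf : torsion_free G)
    (L : S -> P1 C -> Prop) (hL : plectic_decomp v F G L) :
  forall s, ~ (exists z, L s z /\ forall w, L s w -> w = z).
Proof.
move=> s [z [Lz Lu]].
have hv := cs_abs hC.
have hcl := cs_closed hC.
have hp := vp_lt1 hv hC.
have p1 : (1 < p)%N by apply: prime_gt1; exact: cs_prime hC.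
case: hL => hLF hLiff.
have sfF : forall t, subfield (F t) := fun t => ls_subfield (hF t).
have gw : forall t, exists w, [/\ ~ F t w, 0 < v w, v w < 1 &
    forall k, F t k.1 -> F t k.2 -> nz k -> v w <= chord v (Some w) (Pv k)].
  by move=> t; exact (gen_point hv (hF t) hcl).
pose wf t := proj1_sig (boolp.constructive_indefinite_description (gw t)).
have hw : forall t, [/\ ~ F t (wf t), 0 < v (wf t), v (wf t) < 1 &
    forall k, F t k.1 -> F t k.2 -> nz k -> v (wf t) <= chord v (Some (wf t)) (Pv k)].
  by move=> t; rewrite /wf; case: boolp.constructive_indefinite_description.
have final : forall x', limit_set v G x' -> (forall t, t != s -> x' t = Some (wf t)) ->
    ~ L s (x' s) -> False.
  move=> x' lx hx' nLs; have [t' Lt'] := (proj1 (hLiff x')) lx.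
  case: (eqVneq t' s) => [e|ne]; first by apply: nLs; rewrite -e.
  have := hLF t' _ Lt'; rewrite hx' //= => Fw.
  by case: (hw t') => /(_ Fw).
pose xs := fun t => if t == s then z else Some (wf t).
have lxs : limit_set v G xs by apply/hLiff; exists s; rewrite /xs eqxx.
case: lxs => y [gam [Ggam dist conv]].
have GLg : forall j t, (forall a b, F t (gam j t a b)) /\ \det (gam j t) != 0.
  by move=> j t; exact: (sg_GL hG (Ggam j) t).
have ygen : forall t, exists yv, t != s -> y t = Some yv /\ ~ F t yv.
  move=> t; case: (eqVneq t s) => [->|ts]; first by exists 0.
  apply: NNPP => hn.
  have Fy : F t (vecP (y t)).1 /\ F t (vecP (y t)).2.
    case E: (y t) => [yv|] /=.
    - split; last exact: sf1 (sfF t).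
      apply: NNPP => nF; apply: hn; exists yv => _; by split.
    - split; [exact: sf1 (sfF t) | exact: sf0 (sfF t)].
  have [_ w0 _ gen] := hw t.
  have [N hN] := conv t (v (wf t)) w0.
  have := hN N (leqnn N); rewrite /xs (negbTE ts) /= mobiusE (chord_sym hv).
  have [GF Gd] := GLg N t.
  have nk : nz (mv (gam N t) (vecP (y t))) by apply: mv_nz; [rewrite -det2 | exact: nz_vecP].
  have Fk : F t (mv (gam N t) (vecP (y t))).1 /\ F t (mv (gam N t) (vecP (y t))).2.
    case: Fy => F1 F2; rewrite /mv /=; split; apply: (sfD (sfF t)); apply: (sfM (sfF t)) => //.
  case: Fk => F1 F2; by rewrite ltNge (gen _ F1 F2 nk).
pose yf t := proj1_sig (boolp.constructive_indefinite_description (ygen t)).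
have hy : forall t, t != s -> y t = Some (yf t) /\ ~ F t (yf t).
  by move=> t; rewrite /yf; case: boolp.constructive_indefinite_description.
have dex : forall t, exists d, t != s -> [/\ 0 < d, d <= 1 &
    forall k1 k2, F t k1 -> F t k2 -> d * vn v (k1, k2) <= v (yf t * k2 - k1)].
  move=> t; case: (eqVneq t s) => [->|ts]; first by exists 1.
  have [d hd] := ydist hv (hF t) (proj2 (hy t ts)); by exists d.
pose df t := proj1_sig (boolp.constructive_indefinite_description (dex t)).
have hd : forall t, t != s -> [/\ 0 < df t, df t <= 1 &
    forall k1 k2, F t k1 -> F t k2 -> df t * vn v (k1, k2) <= v (yf t * k2 - k1)].
  by move=> t; rewrite /df; case: boolp.constructive_indefinite_description.
have nex : forall j t, exists sg, [/\ sg != 0, F t sg & mn v (sg *: gam j t) = 1].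
  move=> j t; have [GF Gd] := GLg j t.
  by refine (normalize hv (sfF t) GF _); rewrite -det2.
pose sgf j t := proj1_sig (boolp.constructive_indefinite_description (nex j t)).
have hsg : forall j t, [/\ sgf j t != 0, F t (sgf j t) & mn v (sgf j t *: gam j t) = 1].
  by move=> j t; rewrite /sgf; case: boolp.constructive_indefinite_description.
pose A j t := sgf j t *: gam j t.
have FA : forall j t a b, F t (A j t a b).
  move=> j t a b; rewrite /A mxE; apply: (sfM (sfF t)); first by case: (hsg j t).
  by case: (GLg j t).
have mA : forall j t, mn v (A j t) = 1 by move=> j t; case: (hsg j t).
have dA : forall j t, dt (A j t) != 0.
  move=> j t; rewrite -det2 /A detZ mulf_neq0 ?expf_neq0 //; first by case: (hsg j t).
  by case: (GLg j t).
pose eta t := v (wf t) * df t / vn v (yf t, 1).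
have vnpos : forall t, 0 < vn v (yf t, 1).
  move=> t; apply: (lt_le_trans (@ltr01 R)); by rewrite /vn /= (v1 hv) le_max lexx orbT.
have etap : forall t, t != s -> 0 < eta t.
  move=> t ts; have [_ w0 _ _] := hw t; have [d0 _ _] := hd t ts.
  by rewrite /eta divr_gt0 // mulr_gt0.
have Nex : forall t, exists N, t != s -> forall j, (N <= j)%N -> eta t <= v (dt (A j t)).
  move=> t; case: (eqVneq t s) => [->|ts]; first by exists 0%N.
  have [_ w0 _ gen] := hw t; have [d0 _ hdd] := hd t ts.
  have [N hN] := conv t (v (wf t)) w0.
  exists N => _ j hj.
  refine (DB hv (sfF t) (FA j t) (mA j t) d0 hdd gen _).
  rewrite /A mobius_scale; last by case: (hsg j t).
  by have := hN j hj; rewrite /xs (negbTE ts) /= (proj1 (hy t ts)).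
pose Nf t := proj1_sig (boolp.constructive_indefinite_description (Nex t)).
pose J := (\max_(t : S) Nf t)%N.
have hJ : forall t, t != s -> forall j, (J <= j)%N -> eta t <= v (dt (A j t)).
  move=> t ts j hj.
  have := proj2_sig (boolp.constructive_indefinite_description (Nex t)); apply => //.
  exact: (leq_trans (leq_bigmax t) hj).
have sex : forall t, exists sq : seq C, t != s -> forall x, F t x -> v x <= 1 ->
    exists2 r, r \in sq & v (x - r) < eta t.
  move=> t; case: (eqVneq t s) => [->|ts]; first by exists [::].
  have [sq hsq] := approx hv (hF t) (etap t ts); by exists sq.
pose sqf t := proj1_sig (boolp.constructive_indefinite_description (sex t)).
have hsq : forall t, t != s -> forall x, F t x -> v x <= 1 ->
    exists2 r, r \in sqf t & v (x - r) < eta t.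
  by move=> t; rewrite /sqf; case: boolp.constructive_indefinite_description.
pose Mx := (\max_(t : S) size (sqf t))%N.+1.
pose fnd j t (ij : 'I_2 * 'I_2) := find (fun r => v (A j t ij.1 ij.2 - r) < eta t) (sqf t).
have fndlt : forall j t ij, (fnd j t ij < Mx)%N.
  move=> j t ij; rewrite ltnS; apply: leq_trans (find_size _ _) _; exact: leq_bigmax.
pose cls := fun j => [ffun t : S => [ffun ij : 'I_2 * 'I_2 => (inord (fnd j t ij) : 'I_Mx)]].
have [i [j [Ji ij ecl]]] := pigeon cls J.
have close : forall t, t != s -> forall a b, v (A j t a b - A i t a b) < eta t.
  move=> t ts a b.
  have vle : forall k, v (A k t a b) <= 1 by move=> k; rewrite -(mA k t); exact: mn_ge.
  have ex : forall k, has (fun r => v (A k t a b - r) < eta t) (sqf t).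
    move=> k; have [r rin hr] := hsq t ts _ (FA k t a b) (vle k); apply/hasP; by exists r.
  have fe : fnd i t (a, b) = fnd j t (a, b).
    have := congr1 (fun f : {ffun S -> {ffun 'I_2 * 'I_2 -> 'I_Mx}} => nat_of_ord (f t (a, b))) ecl.
    rewrite /cls /= !ffunE /=.
    by rewrite !inordK.
  have hi := nth_find 0 (ex i); have hj := nth_find 0 (ex j).
  rewrite -/(fnd i t (a, b)) in hi; rewrite -/(fnd j t (a, b)) -fe in hj.
  set r := nth 0 (sqf t) (fnd i t (a, b)) in hi hj.
  have -> : A j t a b - A i t a b = (A j t a b - r) - (A i t a b - r) by ring.
  by apply: (vD_lt hv); rewrite ?(vN hv).
pose E := fun t => invmx (gam i t) *m gam j t.
have GE : G E := sg_M hG (sg_V hG (Ggam i)) (Ggam j).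
have nE : ~ proj_eq E (@one_fam C S).
  apply: (E_nontriv hG (Ggam i) (Ggam j)); apply: dist => e; move: ij; by rewrite e ltnn.
have Eform : forall t, t != s -> exists c Y, [/\ c != 0, E t = c *: (1 + Y) & mn v Y < 1].
  move=> t ts.
  have [si0 _ _] := hsg i t; have [sj0 _ _] := hsg j t.
  have dAi := dA i t.
  exists (sgf i t / sgf j t), (invmx (A i t) *m (A j t - A i t)); split.
  - by rewrite mulf_neq0 ?invr_eq0.
  - have gi : gam i t = (sgf i t)^-1 *: A i t by rewrite /A scalerA mulVf // scale1r.
    have gj : gam j t = (sgf j t)^-1 *: A j t by rewrite /A scalerA mulVf // scale1r.
    have uAi : A i t \in unitmx by rewrite unitmxE det2 unitfE.
    have ugi : (sgf i t)^-1 *: A i t \in unitmx.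
      by rewrite -gi unitmxE unitfE; case: (GLg i t).
    rewrite /E gi gj invmxZ // invrK -scalemxAl -scalemxAr scalerA; congr (_ *: _).
    rewrite mulmxBr mulVmx //.
    have e1 : (1 : 'M[C]_2) = 1%:M by [].
    by rewrite -e1 addrC subrK.
  - have [a [b hab]] := mn_attain v (A j t - A i t).
    have hD : mn v (A j t - A i t) < eta t.
      by have := close t ts a b; rewrite -hab /A !mxE.
    apply: le_lt_trans (mn_mul hv _ _) _.
    rewrite (mn_inv hv dAi) mA mulr1 mulrC ltr_pdivrMr ?mul1r; last first.
      by rewrite lt_def (veq0 hv) dAi vge0.
    by apply: lt_le_trans hD _; apply: hJ.
have conv_t : forall t, t != s ->
    cvgP1 v (fun k => mobius (E t ^+ (p ^ k)) (Some (wf t))) (Some (wf t)).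
  move=> t ts e e0.
  have [c [Y [cn eE hY]]] := Eform t ts.
  set th := Num.max (v p%:R) (mn v Y).
  have th0 : 0 <= th by rewrite /th le_max vge0.
  have th1 : th < 1 by rewrite /th gt_max hp hY.
  have [K hK] := geo th0 th1 (mn_ge0 hv Y) e0.
  exists K => k hk; cbv beta.
  have [Z [eZ hZ]] := pow_pk hv hY hp k.
  rewrite eE exprZn eZ mobius_scale ?expf_neq0 // mobiusE mv_add mv_one'.
  rewrite -[X in chord v _ X](Pv_vecP (Some (wf t))).
  apply: le_lt_trans (chord_shift hv _ (nz_vecP _)) _.
  apply: le_lt_trans (hK k hk).
  apply: le_trans hZ.
  rewrite ler_pdivrMr ?vn_gt0 ?nz_vecP //; exact (vn_mv hv _ _).
have limit_gen : forall ys, cvgP1 v (fun k => mobius (E s ^+ (p ^ k)) ys) ys -> ~ L s ys -> False.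
  move=> ys cs nLs.
  pose x' := fun t => if t == s then ys else Some (wf t).
  apply: (final x'); last by rewrite /x' eqxx.
  - exists x', (fun k t => E t ^+ (p ^ k)); split.
    + move=> k; exact: (G_pow hG GE (p ^ k)).
    + move=> k1 k2 nk.
      case: (ltngtP k1 k2) => h.
      * by apply: (pow_distinct hG htf GE nE); rewrite ltn_exp2l.
      * move=> H; apply: (pow_distinct hG htf GE nE (a := p ^ k2) (b := p ^ k1)).
          by rewrite ltn_exp2l.
        exact: proj_eq_sym H.
      * by case: nk; rewrite h.
    + move=> t; rewrite /x'; case: (eqVneq t s) => [->|ts]; first exact: cs.
      exact: conv_t t ts.
  - by move=> t ts; rewrite /x' (negbTE ts).
have dEs : dt (E s) != 0 by rewrite -det2; exact: (G_det hG s GE).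
case: (spart hv hcl hp z (wf s) dEs) => [[f [fz ffix]]|hconv].
- apply: (limit_gen f).
  + move=> e e0; exists 0%N => k _; by rewrite ffix (chord_refl hv).
  + move/Lu => ef; by rewrite ef eqxx in fz.
- apply: (limit_gen (Some (wf s))).
  + move=> e e0; have [K hK] := hconv e e0; by exists K.
  + move=> Ls; have := hLF s _ Ls => /= Fw; by case: (hw s) => /(_ Fw).
Qed.
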